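(* Let $S$ be a finite pseudo-nilpotent semigroup with a fixed principal series $S=S_1\supset\cdots\supset S_m\supset S_{m+1}=\emptyset$, and let $a,b\in S$. If there is an edge in $\mathcal{N}_S$ between $a$ and $b$, then there exists a stem $S^{(i)}$ with $a,b\in S^{(i)}$.
   Context: For a semigroup $S$, $S^1$ denotes $S$ with an identity adjoined (if $S$ has none). For $x,y\in S$, $z_1,z_2,\ldots\in S^1$ define $\lambda_0=x$, $\rho_0=y$, $\lambda_{n+1}=\lambda_n z_{n+1}\rho_n$, $\rho_{n+1}=\rho_n z_{n+1}\lambda_n$; write $\lambda_n(x,y,z_1,\ldots,z_n)$, $\rho_n(x,y,z_1,\ldots,z_n)$. $S$ is nilpotent (Mal'cev) if for some $n\ge1$, $\lambda_n(a,b,c_1,\ldots,c_n)=\rho_n(a,b,c_1,\ldots,c_n)$ for all $a,b\in S$, $c_i\in S^1$. $\langle X\rangle$ is the subsemigroup generated by $X$. The upper non-nilpotent graph $\mathcal{N}_S$ has vertex set $S$ and an edge between $x,y$ iff $\langle x,y\rangle$ is not nilpotent. The empty set counts as an ideal; $S/I$ is the Rees factor, $S/\emptyset=S$. $S$ is pseudo-nilpotent if: whenever $x,y\in S$, $w_1,\ldots,w_m\in S^1$, $T$ is the subsemigroup generated by $x,y$ and the $w_i$ lying in $S$, $I$ is a (possibly empty) ideal of $T$, and $t<m$ are non-negative integers with (writing $\lambda_k=\lambda_k(x,y,w_1,\ldots,w_k)$, $\rho_k$ likewise) $\lambda_t\neq\rho_t$, $(\lambda_t,\rho_t)=(\lambda_m,\rho_m)$,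 $\lambda_m,\rho_m\notin I$, then for all $0\le i\le m$ there is an edge in $\mathcal{N}_{T/I}$ between (the images of) $\lambda_i$ and $\rho_i$. A principal series means each $S_i$ is an ideal of $S$ and no ideal lies strictly between $S_{i+1}$ and $S_i$; principal factors are $S_i/S_{i+1}$. For $1\le j\le m$ put $F^{(j)}=\{s\in S\setminus S_j: st\notin S_{j+1}\text{ or }ts\notin S_{j+1}\text{ for some }t\in S_j\setminus S_{j+1}\}$ and $S^{(j)}=F^{(j)}\cup(S_j\setminus S_{j+1})$. $S_i\setminus S_{i+1}$ is a root if $S_i/S_{i+1}$ is not nilpotent and $\langle a,b\rangle$ is nilpotent for all $a\in S_i\setminus S_{i+1}$, $b\in S_{i+1}$; in that case $S^{(i)}$ is called a stem. *)

(* Defs.v *)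
From mathcomp Require Import all_boot.
Set Implicit Arguments. Unset Strict Implicit. Unset Printing Implicit Defensive.

Section Semigroups.
Variable U : finType.
Variable op : U -> U -> U.

(* S^1: an element of S^1 is [option U]; [None] is the adjoined identity.
   x z y for z in S^1 *)
Definition mul1 (z : option U) (x y : U) : U :=
  match z with Some c => op (op x c) y | None => op x y end.

Definition lr (x y : U) (zs : seq (option U)) : U * U :=
  foldl (fun p z => (mul1 z p.1 p.2, mul1 z p.2 p.1)) (x, y) zs.

Definition in1 (A : {set U}) (z : option U) : bool :=
  match z with Some c => c \in A | None => true end.

(* The subsemigroup A (closed under op) is nilpotent in the sense of Mal'cev. *)
Definition nilpotent_on (A : {set U}) : Prop :=
  exists n : nat, 0 < n /\
    forall a b : U, a \in A -> b \in A ->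
    forall zs : seq (option U), size zs = n -> all (in1 A) zs ->
      (lr a b zs).1 = (lr a b zs).2.

Definition closedb (B : {set U}) : bool :=
  [forall x, forall y, (x \in B) ==> (y \in B) ==> (op x y \in B)].

Definition gen (X : {set U}) : {set U} :=
  [set x | [forall B : {set U}, ((X \subset B) && closedb B) ==> (x \in B)]].

Definition nn_edge (x y : U) : Prop := ~ nilpotent_on (gen [set x; y]).

(* I is a (possibly empty) ideal of the subsemigroup A *)
Definition ideal_of (A I : {set U}) : Prop :=
  I \subset A /\
  forall s i, s \in A -> i \in I -> (op s i \in I) /\ (op i s \in I).

End Semigroups.

(* Rees factor A / I, realised on [option U]: [None] is the zero
   (the class of I), [Some x] is x for x in A \ I. *)
Definition rees_img (U : finType) (I : {set U}) (x : U) : option U :=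
  if x \in I then None else Some x.

Definition rees_op (U : finType) (op : U -> U -> U) (I : {set U})
    (x y : option U) : option U :=
  match x, y with
  | Some a, Some b => rees_img I (op a b)
  | _, _ => None
  end.

Definition rees_dom (U : finType) (A I : {set U}) : {set option U} :=
  [set rees_img I x | x in A].

Definition has_identity (T : finType) (op : T -> T -> T) : bool :=
  [exists e, [forall x, (op e x == x) && (op x e == x)]].

(* pseudo-nilpotency.  w_i in S^1 is encoded as [option T]; if S already has
   an identity then S^1 = S and all w_i must be genuine elements [Some _]. *)
Definition pseudo_nilpotent (T : finType) (op : T -> T -> T) : Prop :=
  forall (x y : T) (ws : seq (option T)),
  (has_identity op -> all (fun z => z != None) ws) ->
  let Tsub := gen op ([set x; y] :|: [set c | Some c \in ws]) in
  let lam k := (lr op x y (take k ws)).1 in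
  let rho k := (lr op x y (take k ws)).2 in
  forall I : {set T}, ideal_of op Tsub I ->
  forall t : nat, t < size ws ->
  lam t <> rho t ->
  (lam t, rho t) = (lam (size ws), rho (size ws)) ->
  lam (size ws) \notin I -> rho (size ws) \notin I ->
  forall i, i <= size ws ->
    nn_edge (rees_op op I) (rees_img I (lam i)) (rees_img I (rho i)).

(* Principal series S = S_1 ⊃ ... ⊃ S_m ⊃ S_{m+1} = ∅ (indices 1..m+1 used). *)
Definition principal_series (T : finType) (op : T -> T -> T)
    (Ser : nat -> {set T}) (m : nat) : Prop :=
  Ser 1 = [set: T] /\ Ser m.+1 = set0 /\
  (forall i, 1 <= i <= m.+1 -> ideal_of op [set: T] (Ser i)) /\
  (forall i, 1 <= i <= m ->
     Ser i.+1 \proper Ser i /\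
     forall J : {set T}, ideal_of op [set: T] J ->
       Ser i.+1 \subset J -> J \subset Ser i -> J = Ser i.+1 \/ J = Ser i).

Definition Fj (T : finType) (op : T -> T -> T) (Ser : nat -> {set T}) (j : nat)
  : {set T} :=
  [set s in ~: Ser j | [exists t in Ser j :\: Ser j.+1,
      (op s t \notin Ser j.+1) || (op t s \notin Ser j.+1)]].

Definition stem_set (T : finType) (op : T -> T -> T) (Ser : nat -> {set T})
    (j : nat) : {set T} :=
  Fj op Ser j :|: (Ser j :\: Ser j.+1).

Definition is_root (T : finType) (op : T -> T -> T) (Ser : nat -> {set T})
    (i : nat) : Prop :=
  ~ nilpotent_on (rees_op op (Ser i.+1)) (rees_dom (Ser i) (Ser i.+1)) /\
  forall a b, a \in Ser i :\: Ser i.+1 -> b \in Ser i.+1 ->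
    nilpotent_on op (gen op [set a; b]).

(* Main.v *)
Require Import Defs.
From mathcomp Require Import all_boot zify.
From Stdlib Require Import Classical.
Set Implicit Arguments. Unset Strict Implicit. Unset Printing Implicit Defensive.

Section Aux.
Variable (T : finType) (op : T -> T -> T).
Hypothesis assoc : associative op.

Lemma gen_sub (X : {set T}) : X \subset gen op X.
Proof.
apply/subsetP=> x Hx; rewrite inE; apply/forallP=> B; apply/implyP=> /andP[/subsetP H _].
exact: H.
Qed.

Lemma gen_min (X B : {set T}) : X \subset B -> closedb op B -> gen op X \subset B.
Proof.
move=> XB cB; apply/subsetP=> x; rewrite inE => /forallP /(_ B).
by rewrite XB cB.
Qed.

Lemma gen_closed (X : {set T}) x y :
  x \in gen op X -> y \in gen op X -> op x y \in gen op X.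
Proof.
rewrite !inE => /forallP Hx /forallP Hy; apply/forallP=> B; apply/implyP=> HB.
move: (Hx B) (Hy B); rewrite HB /= => xB yB.
case/andP: HB => _ /forallP /(_ x) /forallP /(_ y).
by rewrite xB yB.
Qed.

Lemma closedbP (B : {set T}) :
  (forall x y, x \in B -> y \in B -> op x y \in B) -> closedb op B.
Proof.
move=> H; apply/forallP=> x; apply/forallP=> y; apply/implyP=> xB; apply/implyP=> yB.
exact: H.
Qed.

Lemma lr_cons x y z zs :
  lr op x y (z :: zs) = lr op (mul1 op z x y) (mul1 op z y x) zs.
Proof. by []. Qed.

Lemma lr_cat x y s1 s2 :
  lr op x y (s1 ++ s2) = lr op (lr op x y s1).1 (lr op x y s1).2 s2.
Proof. by rewrite /lr foldl_cat; case: (foldl _ _ s1). Qed.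

Lemma lr_eq p zs : (lr op p p zs).1 = (lr op p p zs).2.
Proof. by elim: zs p => [|z zs IH] p //=; rewrite lr_cons; apply: IH. Qed.

End Aux.

Lemma closedbE (T : finType) (op : T -> T -> T) (B : {set T}) x y :
  closedb op B -> x \in B -> y \in B -> op x y \in B.
Proof. by move=> /forallP /(_ x) /forallP /(_ y) H xB yB; move: H; rewrite xB yB. Qed.


Section Aux2.
Variable (T : finType) (op : T -> T -> T).
Hypothesis assoc : associative op.

Lemma all_take_ P (s : seq (option T)) i : all P s -> all P (take i s).
Proof. by rewrite -{1}(cat_take_drop i s) all_cat => /andP[]. Qed.
Lemma all_drop_ P (s : seq (option T)) i : all P s -> all P (drop i s).
Proof. by rewrite -{1}(cat_take_drop i s) all_cat => /andP[]. Qed.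

Lemma lr_in (A : {set T}) a b zs : closedb op A -> a \in A -> b \in A ->
  all (in1 A) zs -> (lr op a b zs).1 \in A /\ (lr op a b zs).2 \in A.
Proof.
move=> cA; elim: zs a b => [|z zs IH] a b Ha Hb //= /andP[Hz Hzs].
rewrite lr_cons; apply: IH => //.
  case: z Hz => [c|] /= Hc; last exact: closedbE.
  by apply: closedbE => //; apply: closedbE.
case: z Hz => [c|] /= Hc; last exact: closedbE.
by apply: closedbE => //; apply: closedbE.
Qed.

Lemma cycle_of_nonnil (A : {set T}) : closedb op A -> ~ nilpotent_on op A ->
  exists x y ws, [/\ x \in A, y \in A, x != y
                   & [/\ 0 < size ws, all (in1 A) ws & lr op x y ws = (x, y)]].
Proof.
move=> cA Hnn; set n := #|{: T * T}|.+1.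
apply: NNPP => Hno; apply: Hnn; exists n; split => // a b Ha Hb zs Hs Hz.
apply: NNPP => Hneq.
pose f (i : 'I_n.+1) := lr op a b (take i zs).
have Hinj : ~ injective f.
  by move=> /leq_card; rewrite card_ord /n ltnNge leqnSn.
have key : forall i j : 'I_n.+1, i < j -> f i = f j -> False.
  move=> i j ltij Hf; apply: Hno.
  have lej : j <= size zs by rewrite Hs -ltnS.
  have eqj : take j zs = take i zs ++ drop i (take j zs).
    by rewrite -{1}(cat_take_drop i (take j zs)) take_takel // ltnW.
  exists (f i).1, (f i).2, (drop i (take j zs)).
  have Hall := all_take_ j Hz.
  have [Hx Hy] := lr_in cA Ha Hb (all_take_ i Hz).
  split => //; last split.
  - apply/eqP => Exy; apply: Hneq.
    have -> : zs = take i zs ++ drop i zs by rewrite cat_take_drop.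
    rewrite lr_cat -/(f i) Exy; apply: lr_eq.
  - by rewrite size_drop size_takel // subn_gt0.
  - exact: all_drop_.
  - by rewrite -lr_cat -eqj -/(f j) -Hf; case: (f i).
have [i [j [Hij Hne]]] : exists i j, f i = f j /\ i <> j.
  apply: NNPP => H; apply: Hinj => i j Hf; apply: NNPP => Hne; apply: H.
  by exists i, j.
have : i < j \/ j < i.
  case: (ltngtP i j) => [h|h|h]; [by left | by right | ].
  by exfalso; apply: Hne; apply: val_inj.
by case=> h; [exact: (key i j h Hij) | exact: (key j i h (esym Hij))].
Qed.

End Aux2.


Section Aux3.
Variable (T : finType) (op : T -> T -> T).
Hypothesis assoc : associative op.

Definition mo (p : option T) x := if p is Some p' then op p' x else x.
Definition mr x (q : option T) := if q is Some q' then op x q' else x.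

Lemma mo_op p x y : op (mo p x) y = mo p (op x y).
Proof. by case: p => [p|] //=; rewrite assoc. Qed.
Lemma op_mr x y q : op x (mr y q) = mr (op x y) q.
Proof. by case: q => [q|] //=; rewrite assoc. Qed.
Lemma mo_mr p x q : mo p (mr x q) = mr (mo p x) q.
Proof. by case: p => [p|]; case: q => [q|] //=; rewrite assoc. Qed.
Lemma mr_op x q y : op (mr x q) y = op x (mo q y).
Proof. by case: q => [q|] //=; rewrite assoc. Qed.
Lemma op_mo x p y : op x (mo p y) = op (mr x p) y.
Proof. by case: p => [p|] //=; rewrite assoc. Qed.
Lemma mul1E z p q : mul1 op z p q = op p (mo z q).
Proof. by case: z => [c|] //=; rewrite assoc. Qed.

Definition isId (I : {set T}) := forall s x, x \in I -> op s x \in I /\ op x s \in I.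

Lemma mo_in I p x : isId I -> x \in I -> mo p x \in I.
Proof. by move=> H xI; case: p => [p|] //=; case: (H p x xI). Qed.
Lemma mr_in I x q : isId I -> x \in I -> mr x q \in I.
Proof. by move=> H xI; case: q => [q|] //=; case: (H q x xI). Qed.
Lemma opl_in I s x : isId I -> x \in I -> op s x \in I.
Proof. by move=> H xI; case: (H s x xI). Qed.
Lemma opr_in I s x : isId I -> x \in I -> op x s \in I.
Proof. by move=> H xI; case: (H s x xI). Qed.

Lemma lr_right p q zs : exists r r', (lr op p q zs).1 = mr p r /\ (lr op p q zs).2 = mr q r'.
Proof.
elim: zs p q => [|z zs IH] p q; first by exists None, None.
rewrite lr_cons; have [r [r' [E1 E2]]] := IH (mul1 op z p q) (mul1 op z q p).
exists (Some (mr (mo z q) r)), (Some (mr (mo z p) r')).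
by rewrite E1 E2 !mul1E /= -!op_mr.
Qed.

Definition occ u z := [exists p : option T, exists q : option T, z == mo p (mr u q)].

Lemma occ_gen u v z : z \in gen op [set u; v] -> z \in gen op [set v] \/ occ u z.
Proof.
move=> Hz.
have : z \in gen op [set v] :|: [set z | occ u z].
  apply: (subsetP (gen_min _ _)) Hz.
    apply/subsetP=> w /set2P[->|->]; apply/setUP.
      by right; rewrite inE; apply/existsP; exists None; apply/existsP; exists None.
    by left; apply: (subsetP (gen_sub op _)); rewrite inE.
  apply: closedbP => x y /setUP[Hx|]; last first.
    rewrite inE => /existsP[p /existsP[q /eqP Ex]] _.
    apply/setUP; right; rewrite inE; apply/existsP; exists p; apply/existsP; exists (Some (mo q y)).
    by rewrite Ex mo_op mr_op.
  case/setUP=> [Hy|]; first by apply/setUP; left; rewrite gen_closed.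
  rewrite inE => /existsP[p /existsP[q /eqP Ey]].
  apply/setUP; right; rewrite inE; apply/existsP; exists (Some (mr x p)); apply/existsP; exists q.
  by rewrite Ey /= op_mo.
move/setUP=> [H|H]; [by left | by right; move: H; rewrite inE].
Qed.

Lemma gen1_comm v x y : x \in gen op [set v] -> y \in gen op [set v] -> op x y = op y x.
Proof.
have C1 : gen op [set v] \subset [set z | op z v == op v z].
  apply: gen_min; first by apply/subsetP=> z; rewrite !inE => /eqP->.
  apply: closedbP => a b; rewrite !inE => /eqP Ha /eqP Hb.
  by rewrite -assoc Hb assoc Ha assoc.
have C2 : gen op [set v] \subset [set z | [forall w in gen op [set v], op z w == op w z]].
  apply: gen_min.
    apply/subsetP=> z; rewrite !inE => /eqP->; apply/forallP=> w; apply/implyP=> Hw.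
    by move: (subsetP C1 w Hw); rewrite inE eq_sym.
  apply: closedbP => a b; rewrite !inE => /forall_inP Ha /forall_inP Hb.
  apply/forall_inP=> w Hw.
  by rewrite -assoc (eqP (Hb w Hw)) assoc (eqP (Ha w Hw)) assoc.
move=> Hx Hy; move: (subsetP C2 x Hx); rewrite inE => /forall_inP /(_ y Hy) /eqP.
done.
Qed.

End Aux3.


Lemma rng1 k m : 1 <= k <= m -> 1 <= k.+1 <= m.+1.
Proof. by case/andP=> h1 h2; apply/andP; split. Qed.
Lemma rng2 k m : 1 <= k <= m -> 1 <= k <= m.+1.
Proof. by case/andP=> h1 h2; apply/andP; split => //; apply: leqW. Qed.

Section Ser.
Variable (T : finType) (op : T -> T -> T).
Hypothesis assoc : associative op.
Variable (Ser : nat -> {set T}) (m : nat).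
Hypothesis PS : principal_series op Ser m.

Lemma ser_ideal i : 1 <= i <= m.+1 -> isId op (Ser i).
Proof.
case: PS => _ [_ [Hid _]] Hi s x Hx.
by case: (Hid i Hi) => _ /(_ s x (in_setT s) Hx).
Qed.

Lemma ser_step j : 1 <= j <= m -> Ser j.+1 \subset Ser j.
Proof. by case: PS => _ [_ [_ Hmax]] Hj; case: (Hmax j Hj) => /proper_sub. Qed.

Lemma ser_mono i j : 1 <= i -> i <= j -> j <= m.+1 -> Ser j \subset Ser i.
Proof.
elim: j => [|j IH] Hi Hij Hjm; first by move: (leq_trans Hi Hij).
case: (ltngtP i j.+1) => [h|h|h]; last by rewrite h.
  rewrite ltnS in h.
  apply: subset_trans (IH Hi h (ltnW Hjm)).
  by apply: ser_step; apply/andP; split; [exact: leq_trans Hi h | rewrite -ltnS].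
by move: (leq_ltn_trans Hij h); rewrite ltnn.
Qed.

Lemma ser_level x : exists k, [/\ 1 <= k <= m, x \in Ser k & x \notin Ser k.+1].
Proof.
case: PS => H1 [Hm _].
have : forall n, x \in Ser 1 -> x \notin Ser n.+1 ->
    exists k, [/\ 1 <= k <= n, x \in Ser k & x \notin Ser k.+1].
  elim=> [|n IH] h1 hn; first by move: hn; rewrite h1.
  case: (boolP (x \in Ser n.+1)) => hx.
    by exists n.+1; split => //; rewrite leqnn.
  have [k [/andP[k1 kn] a b]] := IH h1 hx.
  by exists k; split => //; rewrite k1 (leq_trans kn).
by apply; rewrite ?H1 ?Hm ?inE.
Qed.

Lemma jclass k g c : 1 <= k <= m -> g \in Ser k -> g \notin Ser k.+1 ->
  c \in Ser k -> c \notin Ser k.+1 -> exists a b, c = mo op a (mr op g b).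
Proof.
move=> Hk gk gk1 ck ck1.
have Hk1 : 1 <= k.+1 <= m.+1 by apply: rng1.
have Hk' : 1 <= k <= m.+1 by apply: rng2.
pose K := Ser k.+1 :|: [set s | [exists a, exists b, s == mo op a (mr op g b)]].
have idK : ideal_of op [set: T] K.
  split; first exact: subsetT.
  move=> s i _ /setUP[Hi|].
    by case: (ser_ideal Hk1 s Hi) => h1 h2; rewrite !in_setU h1 h2.
  rewrite inE => /existsP[a /existsP[b /eqP ->]].
  split; apply/setUP; right; rewrite inE.
    apply/existsP; exists (Some (mr op s a)); apply/existsP; exists b.
    by rewrite op_mo.
  apply/existsP; exists a; apply/existsP; exists (Some (mo op b s)).
  by rewrite mo_op // mr_op.
have s1 : Ser k.+1 \subset K by apply/subsetP=> z zi; rewrite in_setU zi.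
have s2 : K \subset Ser k.
  apply/subsetP=> z /setUP[zi|]; first exact: (subsetP (ser_step Hk)).
  rewrite inE => /existsP[a /existsP[b /eqP ->]].
  by apply: mo_in (ser_ideal Hk') _; apply: mr_in (ser_ideal Hk') _.
case: PS => _ [_ [_ Hmax]].
case: (proj2 (Hmax k Hk) K idK s1 s2) => EK.
  have : g \in K.
    apply/setUP; right; rewrite inE; apply/existsP; exists None; apply/existsP; exists None.
    by [].
  by rewrite EK (negbTE gk1).
have : c \in K by rewrite EK.
case/setUP => [h|]; first by rewrite h in ck1.
by rewrite inE => /existsP[a /existsP[b /eqP ->]]; exists a, b.
Qed.

Lemma stem_notin k s : 1 <= k <= m -> s \in stem_set op Ser k -> s \notin Ser k.+1.
Proof.
move=> Hk; rewrite /stem_set /Fj => /setUP[|/setDP[] //].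
rewrite inE => /andP[]; rewrite inE => sk _.
by apply/negP=> /(subsetP (ser_step Hk)); rewrite (negbTE sk).
Qed.

Lemma stem_wit k u t : 1 <= k <= m -> t \in Ser k ->
  (op u t \notin Ser k.+1) || (op t u \notin Ser k.+1) -> u \in stem_set op Ser k.
Proof.
move=> Hk tk Hw.
have Hk1 : 1 <= k.+1 <= m.+1 by apply: rng1.
have tk1 : t \notin Ser k.+1.
  apply/negP=> h; case/orP: Hw; apply/negP/negPn.
    exact: opl_in (ser_ideal Hk1) h.
  exact: opr_in (ser_ideal Hk1) h.
have uk1 : u \notin Ser k.+1.
  apply/negP=> h; case/orP: Hw; apply/negP/negPn.
    exact: opr_in (ser_ideal Hk1) h.
  exact: opl_in (ser_ideal Hk1) h.
rewrite /stem_set; apply/setUP.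
case: (boolP (u \in Ser k)) => uk; first by right; rewrite in_setD uk uk1.
left; rewrite /Fj inE inE uk /=; apply/existsP; exists t.
by rewrite in_setD tk tk1 Hw.
Qed.

Lemma stem_g k a : 1 <= k <= m -> a \in stem_set op Ser k ->
  exists g r, [/\ g \in Ser k, g \notin Ser k.+1 & (g = mr op a r \/ g = mo op r a)].
Proof.
move=> Hk; rewrite /stem_set => /setUP[|/setDP[ak ak1]]; last first.
  by exists a, None; split => //; left.
rewrite /Fj inE => /andP[_ /existsP[t /andP[/setDP[tk tk1] Hw]]].
have Hk' : 1 <= k <= m.+1 by apply: rng2.
case/orP: Hw => Hw.
  exists (op a t), (Some t); split => //; last by left.
  exact: opl_in (ser_ideal Hk') tk.
exists (op t a), (Some t); split => //; last by right.
exact: opr_in (ser_ideal Hk') tk.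
Qed.

End Ser.


Section Cyc.
Variable (T : finType) (op : T -> T -> T).
Hypothesis assoc : associative op.
Variable (Ser : nat -> {set T}) (m : nat).
Hypothesis PS : principal_series op Ser m.

Lemma cycle_decomp x y w ws : lr op x y (w :: ws) = (x, y) ->
  exists r r', x = op x (mr op (mo op w y) r) /\ y = op y (mr op (mo op w x) r').
Proof.
rewrite lr_cons => Hlr.
have [r [r' [E1 E2]]] := lr_right assoc (mul1 op w x y) (mul1 op w y x) ws.
rewrite Hlr /= !(mul1E assoc) in E1 E2.
by exists r, r'; rewrite !op_mr // -E1 -E2.
Qed.

Lemma cycle_facts x y ws k : 0 < size ws -> lr op x y ws = (x, y) ->
  1 <= k <= m -> x \in Ser k -> x \notin Ser k.+1 -> y \in Ser k /\ y \notin Ser k.+1.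
Proof.
case: ws => [|w ws] // _ Hlr Hk xk xk1.
have Ik := ser_ideal PS (rng2 Hk); have Ik1 := ser_ideal PS (rng1 Hk).
have [r [r' [E1 E2]]] := cycle_decomp Hlr.
have yk : y \in Ser k.
  by rewrite E2; apply: (opl_in _ Ik); apply: (mr_in _ Ik); apply: (mo_in _ Ik).
split => //; apply/negP => yk1; move: xk1; rewrite E1.
by rewrite (opl_in _ Ik1) //; apply: (mr_in _ Ik1); apply: (mo_in _ Ik1).
Qed.

Lemma cycle_stem u v x y ws k :
  x \in gen op [set u; v] -> y \in gen op [set u; v] -> x != y -> 0 < size ws ->
  all (in1 (gen op [set u; v])) ws -> lr op x y ws = (x, y) ->
  1 <= k <= m -> x \in Ser k -> x \notin Ser k.+1 -> u \in stem_set op Ser k.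
Proof.
move=> Hx Hy Hxy Hsz Hall Hlr Hk xk xk1.
have [yk yk1] := cycle_facts Hsz Hlr Hk xk xk1.
case: ws Hsz Hall Hlr => [|w ws] // _ /andP[Hw _] Hlr.
have Ik := ser_ideal PS (rng2 Hk); have Ik1 := ser_ideal PS (rng1 Hk).
have [r [r' [Ex Ey]]] := cycle_decomp Hlr.
have Hocc : occ op u x \/ occ op u y \/ exists c, w = Some c /\ occ op u c.
  apply: NNPP => H.
  have nx : ~ occ op u x by move=> h; apply: H; left.
  have ny : ~ occ op u y by move=> h; apply: H; right; left.
  have gx : x \in gen op [set v] by case: (occ_gen assoc Hx).
  have gy : y \in gen op [set v] by case: (occ_gen assoc Hy).
  have E : mul1 op w x y = mul1 op w y x.
    rewrite !(mul1E assoc); case: w Hw Hlr Ex Ey H => [c|] /= Hc Hlr Ex Ey H.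
      have gc : c \in gen op [set v].
        case: (occ_gen assoc Hc) => // h; exfalso; apply: H; right; right; by exists c.
      rewrite (gen1_comm assoc gc gy) (gen1_comm assoc gc gx).
      by rewrite !assoc (gen1_comm assoc gx gy).
    exact: (gen1_comm assoc gx gy).
  move: Hlr; rewrite lr_cons E => Hlr.
  have := lr_eq op (mul1 op w y x) ws; rewrite Hlr /= => Exy.
  by rewrite Exy eqxx in Hxy.
suffices [t [tk Ht]] : exists t, t \in Ser k /\ op u t \notin Ser k.+1.
  by apply: (stem_wit PS Hk tk); rewrite Ht.
case: Hocc => [/existsP[p /existsP[q /eqP Eq]]|[/existsP[p /existsP[q /eqP Eq]]|]].
- exists (mo op q (mr op (mo op w y) r)); split.
    by apply: (mo_in _ Ik); apply: (mr_in _ Ik); apply: (mo_in _ Ik).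
  apply/negP=> h; move: xk1; rewrite Ex {1}Eq mo_op // mr_op //.
  by rewrite (mo_in _ Ik1 h).
- exists (mo op q (mr op (mo op w x) r')); split.
    by apply: (mo_in _ Ik); apply: (mr_in _ Ik); apply: (mo_in _ Ik).
  apply/negP=> h; move: yk1; rewrite Ey {1}Eq mo_op // mr_op //.
  by rewrite (mo_in _ Ik1 h).
- case=> c [Ew /existsP[p /existsP[q /eqP Eq]]].
  exists (mr op (mo op q y) r); split.
    by apply: (mr_in _ Ik); apply: (mo_in _ Ik).
  apply/negP=> h; move: xk1; rewrite Ex Ew /= Eq mo_op // mr_op // -mo_mr // -op_mr //.
  by rewrite op_mo // (opl_in _ Ik1 h).
Qed.

End Cyc.


Lemma nil_transfer (U : finType) (op1 op2 : U -> U -> U) (G B D : {set U}) :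
  G \subset B -> B \subset D -> closedb op1 B ->
  (forall p q, p \in B -> q \in B -> op1 p q = op2 p q) ->
  nilpotent_on op2 D -> nilpotent_on op1 G.
Proof.
move=> GB BD cB Eop [n [n0 H]]; exists n; split => // a b Ha Hb zs Hs Hz.
have Hin : forall z, in1 G z -> in1 B z.
  by case=> [c|] //= Hc; apply: (subsetP GB).
have HinD : forall z, in1 B z -> in1 D z.
  by case=> [c|] //= Hc; apply: (subsetP BD).
have Heq : forall p q zs, p \in B -> q \in B -> all (in1 B) zs ->
    lr op1 p q zs = lr op2 p q zs.
  move=> p q zs0; elim: zs0 p q => [|z zs0 IH] p q Hp Hq //= /andP[Hz0 Hzs].
  rewrite !lr_cons.
  have E1 : mul1 op1 z p q = mul1 op2 z p q /\ mul1 op1 z p q \in B.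
    case: z Hz0 => [c|] /= Hc.
      have pc : op1 p c \in B by apply: closedbE.
      by rewrite -!Eop //; split => //; apply: closedbE.
    by rewrite Eop //; split => //; rewrite -Eop //; apply: closedbE.
  have E2 : mul1 op1 z q p = mul1 op2 z q p /\ mul1 op1 z q p \in B.
    case: z Hz0 {E1} => [c|] /= Hc.
      have pc : op1 q c \in B by apply: closedbE.
      by rewrite -!Eop //; split => //; apply: closedbE.
    by rewrite Eop //; split => //; rewrite -Eop //; apply: closedbE.
  case: E1 => <- ?; case: E2 => <- ?; exact: IH.
have HzB : all (in1 B) zs.
  by apply/allP => z Hzz; apply: Hin; exact: (allP Hz z Hzz).
rewrite Heq //; try by apply: (subsetP GB).
apply: H => //; try by apply: (subsetP BD); apply: (subsetP GB).
by apply/allP => z Hzz; apply: HinD; exact: (allP HzB z Hzz).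
Qed.

Lemma fix_identity (T : finType) (op : T -> T -> T) x y ws :
  exists ws', [/\ size ws' = size ws, lr op x y ws' = lr op x y ws &
     (has_identity op -> all (fun z => z != None) ws')].
Proof.
case: (boolP (has_identity op)) => [/existsP[e /forallP He]|hn]; last first.
  by exists ws; split => // h; rewrite h in hn.
exists (map (fun z => if z is Some c then Some c else Some e) ws); split.
- by rewrite size_map.
- elim: ws x y => [|z zs IH] x y //=; rewrite !lr_cons -IH.
  case: z => [c|] //=; case/andP: (He x) => _ /eqP ->.
  by case/andP: (He y) => _ /eqP ->.
- by move=> _; elim: ws => [|[c|] zs IH].
Qed.


Section Main.
Variable (T : finType) (op : T -> T -> T).
Hypothesis assoc : associative op.
Variable (Ser : nat -> {set T}) (m : nat).
Hypothesis PS : principal_series op Ser m.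
Hypothesis PN : pseudo_nilpotent op.

Lemma cycle_nn x y ws k : x != y -> 0 < size ws -> lr op x y ws = (x, y) ->
  1 <= k <= m -> x \in Ser k -> x \notin Ser k.+1 ->
  ~ nilpotent_on (rees_op op (Ser k.+1)) (rees_dom (Ser k) (Ser k.+1)).
Proof.
move=> Hxy Hsz Hlr Hk xk xk1.
have [yk yk1] := cycle_facts assoc PS Hsz Hlr Hk xk xk1.
have [ws' [Esz Elr Hid]] := fix_identity op x y ws.
set Tsub := gen op ([set x; y] :|: [set c | Some c \in ws']).
set I := Ser k.+1 :&: Tsub.
have Ik := ser_ideal PS (rng2 Hk); have Ik1 := ser_ideal PS (rng1 Hk).
have xT : x \in Tsub by apply: (subsetP (gen_sub op _)); rewrite !inE eqxx.
have yT : y \in Tsub by apply: (subsetP (gen_sub op _)); rewrite !inE eqxx orbT.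
have idI : ideal_of op Tsub I.
  split; first exact: subsetIr.
  move=> s i sT /setIP[i1 iT]; rewrite !in_setI.
  split; apply/andP; split.
  - exact: (opl_in _ Ik1 i1).
  - exact: (gen_closed sT iT).
  - exact: (opr_in _ Ik1 i1).
  - exact: (gen_closed iT sT).
have xI : x \notin I by rewrite inE (negbTE xk1).
have yI : y \notin I by rewrite inE (negbTE yk1).
have Hlr' : lr op x y ws' = (x, y) by rewrite Elr.
have P1 : 0 < size ws' by rewrite Esz; exact: Hsz.
have P2 : (lr op x y (take 0 ws')).1 <> (lr op x y (take 0 ws')).2.
  by rewrite take0 /= => E; rewrite E eqxx in Hxy.
have P3 : ((lr op x y (take 0 ws')).1, (lr op x y (take 0 ws')).2) =
          ((lr op x y (take (size ws') ws')).1, (lr op x y (take (size ws') ws')).2).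
  by rewrite take0 take_size Hlr'.
have P4 : (lr op x y (take (size ws') ws')).1 \notin I by rewrite take_size Hlr'.
have P5 : (lr op x y (take (size ws') ws')).2 \notin I by rewrite take_size Hlr'.
have Hnn := PN Hid idI P1 P2 P3 P4 P5 (leq0n (size ws')).
have Hnn' : nn_edge (rees_op op I) (rees_img I x) (rees_img I y).
  by move: Hnn; rewrite take0.
move: Hnn'; rewrite /rees_img (negbTE xI) (negbTE yI) /nn_edge => Hnn' Hnil.
apply: Hnn'.
have memI : forall z, z \in Tsub -> (z \in I) = (z \in Ser k.+1).
  by move=> z zT; rewrite in_setI zT andbT.
have imgN : forall (J : {set T}) p, p \in J -> rees_img J p = None.
  by move=> J p h; rewrite /rees_img h.
have imgS : forall (J : {set T}) p, p \notin J -> rees_img J p = Some p.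
  by move=> J p h; rewrite /rees_img (negbTE h).
set B := [set rees_img I p | p in Tsub :&: Ser k].
have inB : forall p, p \in Tsub -> p \in Ser k -> rees_img I p \in B.
  by move=> p pT pk; apply/imsetP; exists p => //; rewrite in_setI pT pk.
have cB : closedb (rees_op op I) B.
  apply: closedbP => o1 o2 /imsetP[p1 /setIP[p1T p1k] ->] /imsetP[p2 /setIP[p2T p2k] ->].
  case: (boolP (p1 \in I)) => h1.
    rewrite (imgN _ _ h1); change (None \in B); rewrite -(imgN _ _ h1); exact: inB.
  case: (boolP (p2 \in I)) => h2.
    rewrite (imgS _ _ h1) (imgN _ _ h2); change (None \in B); rewrite -(imgN _ _ h2); exact: inB.
  rewrite (imgS _ _ h1) (imgS _ _ h2); change (rees_img I (op p1 p2) \in B); apply: inB.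
    exact: gen_closed.
  exact: (opl_in _ Ik p2k).
apply: (nil_transfer (B := B) (D := rees_dom (Ser k) (Ser k.+1))) Hnil.
- apply: gen_min cB.
  apply/subsetP=> o /set2P[->|->].
    by rewrite -(imgS _ _ xI); apply: inB.
  by rewrite -(imgS _ _ yI); apply: inB.
- apply/subsetP=> o /imsetP[p /setIP[pT pk] ->]; apply/imsetP; exists p => //.
  by rewrite /rees_img memI.
- exact: cB.
- move=> o1 o2 /imsetP[p1 /setIP[p1T p1k] ->] /imsetP[p2 /setIP[p2T p2k] ->].
  rewrite /rees_img !memI //.
  case: (p1 \in Ser k.+1) => //; case: (p2 \in Ser k.+1) => //.
  change (rees_img I (op p1 p2) = rees_img (Ser k.+1) (op p1 p2)).
  by rewrite /rees_img memI // gen_closed.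
Qed.

Lemma propagate a c k k' : 1 <= k <= m -> 1 <= k' <= m -> k < k' ->
  a \in stem_set op Ser k -> c \in Ser k -> c \notin Ser k.+1 ->
  c \in stem_set op Ser k' -> a \in stem_set op Ser k'.
Proof.
move=> Hk Hk' kk' Ha ck ck1 Hc.
have sub : Ser k' \subset Ser k.+1.
  by apply: (ser_mono PS (ltn0Sn k) kk'); apply: leqW; case/andP: Hk'.
have [g [r [gk gk1 Hg]]] := stem_g PS Hk Ha.
have [al [be Ec]] := jclass assoc PS Hk gk gk1 ck ck1.
have Ik' := ser_ideal PS (rng2 Hk'); have Ik1 := ser_ideal PS (rng1 Hk').
move: Hc; rewrite /stem_set => /setUP[|/setDP[ck' _]]; last first.
  by move: (subsetP sub c ck'); rewrite (negbTE ck1).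
rewrite /Fj inE => /andP[_ /existsP[t' /andP[/setDP[t'k _] Hw]]].
suffices [t [tk Ht]] : exists t, t \in Ser k' /\
    ((op a t \notin Ser k'.+1) || (op t a \notin Ser k'.+1)).
  exact: (stem_wit PS Hk' tk Ht).
case/orP: Hw => Hw; case: Hg => Eg.
- exists (mo op r (mo op be t')); split; first by apply: (mo_in _ Ik'); apply: (mo_in _ Ik').
  apply/orP; left; apply/negP => h; move/negP: Hw; apply.
  rewrite Ec Eg mo_op // mr_op // mr_op //; exact: (mo_in _ Ik1).
- exists (mo op be t'); split; first by apply: (mo_in _ Ik').
  apply/orP; left; apply/negP => h; move/negP: Hw; apply.
  rewrite Ec Eg mo_op // mr_op // mo_op //; apply: (mo_in _ Ik1); exact: (mo_in _ Ik1).
- exists (mr op t' al); split; first by apply: (mr_in _ Ik').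
  apply/orP; right; apply/negP => h; move/negP: Hw; apply.
  rewrite Ec Eg op_mo // op_mr // op_mr //; apply: (mr_in _ Ik1); exact: (mr_in _ Ik1).
- exists (mr op (mr op t' al) r); split; first by apply: (mr_in _ Ik'); apply: (mr_in _ Ik').
  apply/orP; right; apply/negP => h; move/negP: Hw; apply.
  rewrite Ec Eg op_mo // op_mr // op_mo //; exact: (mr_in _ Ik1).
Qed.

Lemma CL u v : ~ nilpotent_on op (gen op [set u; v]) ->
  exists k, [/\ 1 <= k <= m,
    ~ nilpotent_on (rees_op op (Ser k.+1)) (rees_dom (Ser k) (Ser k.+1)),
    u \in stem_set op Ser k & v \in stem_set op Ser k].
Proof.
move=> Hnn.
have cA : closedb op (gen op [set u; v]) by apply: closedbP => x y; apply: gen_closed.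
have [x [y [ws [Hx Hy Hxy [Hsz Hall Hlr]]]]] := cycle_of_nonnil cA Hnn.
have [k [Hk xk xk1]] := ser_level PS x.
exists k; split => //.
- exact: (cycle_nn Hxy Hsz Hlr Hk xk xk1).
- exact: (cycle_stem assoc PS Hx Hy Hxy Hsz Hall Hlr Hk xk xk1).
have E : [set u; v] = [set v; u] by rewrite setUC.
rewrite E in Hx Hy Hall.
exact: (cycle_stem assoc PS Hx Hy Hxy Hsz Hall Hlr Hk xk xk1).
Qed.

End Main.


Theorem corollary3p9 (T : finType) (op : T -> T -> T) (assoc : associative op)
    (Ser : nat -> {set T}) (m : nat) (a b : T) :
  pseudo_nilpotent op ->
  principal_series op Ser m ->
  nn_edge op a b ->
  exists i, [/\ 1 <= i <= m, is_root op Ser i,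
                a \in stem_set op Ser i & b \in stem_set op Ser i].
Proof.
move=> PN PS Hedge.
have [k0 [Hk0 NN0 a0 b0]] := CL assoc PS PN Hedge.
suffices H : forall n k, m - k < n -> 1 <= k <= m ->
    ~ nilpotent_on (rees_op op (Ser k.+1)) (rees_dom (Ser k) (Ser k.+1)) ->
    a \in stem_set op Ser k -> b \in stem_set op Ser k ->
    exists i, [/\ 1 <= i <= m, is_root op Ser i,
                a \in stem_set op Ser i & b \in stem_set op Ser i].
  exact: (H (m - k0).+1 k0 (ltnSn _) Hk0 NN0 a0 b0).
elim=> [|n IH] k // Hn Hk NN ak bk.
case: (classic (forall c d, c \in Ser k :\: Ser k.+1 -> d \in Ser k.+1 ->
                  nilpotent_on op (gen op [set c; d]))) => [Hall|Hnot].
  by exists k; split.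
have [c [d [Hc [Hd Hnd]]]] : exists c d, [/\ c \in Ser k :\: Ser k.+1, d \in Ser k.+1 &
    ~ nilpotent_on op (gen op [set c; d])].
  apply: NNPP => H0; apply: Hnot => c d Hc Hd; apply: NNPP => Hn0; apply: H0.
  by exists c, d.
have [k' [Hk' NN' ck' dk']] := CL assoc PS PN Hnd.
case/setDP: Hc => ck ck1.
have kk' : k < k'.
  rewrite ltnNge; apply/negP => h.
  have := stem_notin PS Hk' dk'; apply/negP/negPn.
  apply: (subsetP (ser_mono PS _ _ _)) Hd => //.
  by case/andP: Hk => _ h2.
apply: (IH k') => //.
- by case/andP: Hk' => _ h2; lia.
- exact: (propagate assoc PS Hk Hk' kk' ak ck ck1 ck').
- exact: (propagate assoc PS Hk Hk' kk' bk ck ck1 ck').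
Qed.
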